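(* Let $w_k^A,w_k^B$ be the noise vectors associated with SDQ (see context), under the assumptions that rewards satisfy $|r(s,a,s')|\le1$, $\|Q_0^A\|_\infty,\|Q_0^B\|_\infty\le1$ and $\alpha\in(0,1)$. Then for all $k\ge0$, \[ \mathbb{E}\big[(w_k^A-w_k^B)^T(w_k^A-w_k^B)\big]\le\frac{16}{(1-\gamma)^2}. \]
   Context: Finite MDP with states $\mathcal{S}=\{1,\dots,|\mathcal{S}|\}$, actions $\mathcal{A}=\{1,\dots,|\mathcal{A}|\}$, transitions $P(s'|s,a)$, deterministic reward $r(s,a,s')$ with $|r|\le 1$, discount $\gamma\in(0,1)$. Sampling distribution $d(s,a)>0$ on $\mathcal{S}\times\mathcal{A}$; at iteration $k$, $(s_k,a_k)\sim d$ i.i.d., $s_k'\sim P(\cdot|s_k,a_k)$, $r_{k+1}=r(s_k,a_k,s_k')$. Constant step-size $\alpha\in(0,1)$. SDQ: only entry $(s_k,a_k)$ is updated, $Q_{k+1}^A(s_k,a_k)=Q_k^A(s_k,a_k)+\alpha\{r_{k+1}+\gamma Q_k^A(s_k',\arg\max_aQ_k^B(s_k',a))-Q_k^A(s_k,a_k)\}$ and symmetrically for $B$ with roles of $A,B$ swapped. Vector notation: $Q\in\mathbb{R}^{|\mathcal{S}||\mathcal{A}|}$ stacks $Q(\cdot,1),\dots,Q(\cdot,|\mathcal{A}|)$, so $Q(s,a)=(e_a\otimes e_s)^TQ$. $D$ is the diagonal matrix with entry $d(s,a)$ at position $(s,a)$. $P\in\mathbb{R}^{|\mathcal{S}||\mathcal{A}|\times|\mathcal{S}|}$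 has row $(s,a)$ equal to $P(\cdot|s,a)$. $R(s,a)=\mathbb{E}[r(s,a,s')|s,a]$. For $Q$, $\pi_Q(s)=\arg\max_aQ(s,a)$ (fixed tie-breaking) and $\Pi_Q\in\mathbb{R}^{|\mathcal{S}|\times|\mathcal{S}||\mathcal{A}|}$ has $s$-th row $e_{\pi_Q(s)}^T\otimes e_s^T$. Noise: $w_k^A=(e_{a_k}\otimes e_{s_k})r_{k+1}+\gamma(e_{a_k}\otimes e_{s_k})e_{s_k'}^T\Pi_{Q_k^B}Q_k^A-(e_{a_k}\otimes e_{s_k})(e_{a_k}\otimes e_{s_k})^TQ_k^A-(DR+\gamma DP\Pi_{Q_k^B}Q_k^A-DQ_k^A)$, and $w_k^B$ is the same with $A$ and $B$ swapped. *)

(* Defs.v *)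
(* Q-functions are represented as functions S -> A -> R
   (the vector Q in R^{|S||A|} with Q(s,a) = (e_a (x) e_s)^T Q). *)
From mathcomp Require Import all_boot all_order all_algebra.
Set Implicit Arguments. Unset Strict Implicit. Unset Printing Implicit Defensive.
Import Order.TTheory GRing.Theory Num.Theory.
Local Open Scope ring_scope.

Section SDQ.
Variables (R : realFieldType) (S A : finType).

Definition sample := (S * A * S)%type.

(* greedy policy pi_Q(s) = argmax_a Q(s,a), with a fixed selector [am] *)
Definition greedy (am : (A -> R) -> A) (Q : S -> A -> R) (s : S) : A := am (Q s).

Definition sdq_step (gamma alpha : R) (am : (A -> R) -> A)
  (r : S -> A -> S -> R) (QQ : (S -> A -> R) * (S -> A -> R)) (x : sample)
  : (S -> A -> R) * (S -> A -> R) :=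
  let '(s, a, s') := x in
  let QA := QQ.1 in let QB := QQ.2 in
  ((fun s0 a0 => if (s0 == s) && (a0 == a)
                 then QA s a + alpha * (r s a s' + gamma * QA s' (greedy am QB s') - QA s a)
                 else QA s0 a0),
   (fun s0 a0 => if (s0 == s) && (a0 == a)
                 then QB s a + alpha * (r s a s' + gamma * QB s' (greedy am QA s') - QB s a)
                 else QB s0 a0)).

(* (Q_k^A, Q_k^B) after processing the samples xs = [x_0; ...; x_{k-1}] *)
Definition sdq_iter (gamma alpha : R) (am : (A -> R) -> A) (r : S -> A -> S -> R)
  (QA0 QB0 : S -> A -> R) (xs : seq sample) : (S -> A -> R) * (S -> A -> R) :=
  foldl (sdq_step gamma alpha am r) (QA0, QB0) xs.

Definition exp_reward (P : S -> A -> S -> R) (r : S -> A -> S -> R) (s : S) (a : A) : R :=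
  \sum_(s' : S) P s a s' * r s a s'.

(* noise w_k^A (componentwise unfolding of the vector formula), with
   Q1 = Q_k^A (evaluated) and Q2 = Q_k^B (greedy); w_k^B is noise with Q1,Q2 swapped *)
Definition noise (d : S -> A -> R) (P : S -> A -> S -> R) (r : S -> A -> S -> R)
  (gamma : R) (am : (A -> R) -> A) (Q1 Q2 : S -> A -> R) (x : sample) : S -> A -> R :=
  let '(s, a, s') := x in
  fun s0 a0 =>
    (if (s0 == s) && (a0 == a)
     then r s a s' + gamma * Q1 s' (greedy am Q2 s') - Q1 s a else 0)
    - d s0 a0 * (exp_reward P r s0 a0
                 + gamma * (\sum_(s'' : S) P s0 a0 s'' * Q1 s'' (greedy am Q2 s''))
                 - Q1 s0 a0).

Definition sqnorm (v : S -> A -> R) : R := \sum_(s : S) \sum_(a : A) v s a ^+ 2.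

Definition sample_prob (d : S -> A -> R) (P : S -> A -> S -> R) (x : sample) : R :=
  let '(s, a, s') := x in d s a * P s a s'.

Definition expect (d : S -> A -> R) (P : S -> A -> S -> R) (k : nat)
  (f : {ffun 'I_k.+1 -> sample} -> R) : R :=
  \sum_(t : {ffun 'I_k.+1 -> sample}) (\prod_(i < k.+1) sample_prob d P (t i)) * f t.

Definition hist (k : nat) (t : {ffun 'I_k.+1 -> sample}) : seq sample :=
  [seq t (inord i) | i <- iota 0 k].
Definition cur (k : nat) (t : {ffun 'I_k.+1 -> sample}) : sample := t ord_max.

Definition noise_diff_sq (d : S -> A -> R) (P : S -> A -> S -> R) (r : S -> A -> S -> R)
  (gamma alpha : R) (am : (A -> R) -> A) (QA0 QB0 : S -> A -> R) (k : nat)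
  (t : {ffun 'I_k.+1 -> sample}) : R :=
  let QQ := sdq_iter gamma alpha am r QA0 QB0 (hist t) in
  let wA := noise d P r gamma am QQ.1 QQ.2 (cur t) in
  let wB := noise d P r gamma am QQ.2 QQ.1 (cur t) in
  sqnorm (fun s a => wA s a - wB s a).

End SDQ.

(* Main.v *)
Require Import Defs.
From mathcomp Require Import all_boot all_order all_algebra.
From mathcomp Require Import ring lra.
Import Order.TTheory GRing.Theory Num.Theory.
Local Open Scope ring_scope.

Section H.
Variables (R : realFieldType) (S A : finType).

Lemma greedy_diff (am : (A -> R) -> A) (Q1 Q2 : S -> A -> R) (D : R) s :
  (forall (f : A -> R) (a : A), f a <= f (am f)) ->
  (forall s a, `|Q1 s a - Q2 s a| <= D) ->
  `|Q1 s (greedy am Q2 s) - Q2 s (greedy am Q1 s)| <= D.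
Proof.
move=> hm hD; rewrite /greedy.
have h1 := hm (Q1 s) (am (Q2 s)).
have h2 := hm (Q2 s) (am (Q1 s)).
have := hD s (am (Q1 s)); have := hD s (am (Q2 s)).
rewrite !ler_norml => /andP[a1 a2] /andP[b1 b2].
apply/andP; split; lra.
Qed.

Lemma iter_inv gamma alpha am r (xs : seq (sample S A)) QQ :
  0 < gamma < 1 -> 0 < alpha < 1 ->
  (forall (f : A -> R) (a : A), f a <= f (am f)) ->
  (forall s a, `|QQ.1 s a - QQ.2 s a| <= 2) ->
  forall s a, `|(foldl (sdq_step gamma alpha am r) QQ xs).1 s a
               - (foldl (sdq_step gamma alpha am r) QQ xs).2 s a| <= 2.
Proof.
move=> /andP[hg0 hg1] /andP[ha0 ha1] hm.
elim: xs QQ => [|[[s a] s'] xs IH] QQ hQ //=.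
apply: IH => s0 a0 /=.
case: ifP => _; last exact: hQ.
have E := @greedy_diff am QQ.1 QQ.2 2 s' hm hQ.
have F := hQ s a.
move: E F; rewrite !ler_norml => /andP[e1 e2] /andP[f1 f2].
set X := QQ.1 s' _ - _ in e1 e2.
have -> : QQ.1 s a + alpha * (r s a s' + gamma * QQ.1 s' (greedy am QQ.2 s') - QQ.1 s a) -
   (QQ.2 s a + alpha * (r s a s' + gamma * QQ.2 s' (greedy am QQ.1 s') - QQ.2 s a))
   = (1 - alpha) * (QQ.1 s a - QQ.2 s a) + alpha * gamma * X by rewrite /X; ring.
have p1 : 0 <= (1 - alpha) * (2 - (QQ.1 s a - QQ.2 s a)) by apply: mulr_ge0; lra.
have p2 : 0 <= (1 - alpha) * (2 + (QQ.1 s a - QQ.2 s a)) by apply: mulr_ge0; lra.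
have ag : 0 <= alpha * gamma by apply: mulr_ge0; lra.
have ag1 : alpha * gamma <= alpha by rewrite -[X in _ <= X]mulr1 ler_wpM2l //; lra.
have p3 : 0 <= alpha * gamma * (2 - X) by apply: mulr_ge0; lra.
have p4 : 0 <= alpha * gamma * (2 + X) by apply: mulr_ge0; lra.
apply/andP; split; nra.
Qed.


Lemma pointwise (d : S -> A -> R) (P : S -> A -> S -> R) (r : S -> A -> S -> R)
  (gamma : R) (am : (A -> R) -> A) (Q1 Q2 : S -> A -> R) (x : sample S A) :
  (forall s a, 0 < d s a) ->
  \sum_(s : S) \sum_(a : A) d s a = 1 ->
  (forall s a s', 0 <= P s a s') ->
  (forall s a, \sum_(s' : S) P s a s' = 1) ->
  0 < gamma < 1 ->
  (forall (f : A -> R) (a : A), f a <= f (am f)) ->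
  (forall s a, `|Q1 s a - Q2 s a| <= 2) ->
  sqnorm (fun s a => noise d P r gamma am Q1 Q2 x s a - noise d P r gamma am Q2 Q1 x s a)
    <= 16 / (1 - gamma) ^+ 2.
Proof.
move=> hd hd1 hP hP1 /andP[hg0 hg1] hm hQ.
case: x => [[s a] s'].
set C := 2 + 2 * gamma.
pose Z s0 a0 := gamma * \sum_(s'' : S) P s0 a0 s'' *
   (Q1 s'' (greedy am Q2 s'') - Q2 s'' (greedy am Q1 s'')) - (Q1 s0 a0 - Q2 s0 a0).
pose X := gamma * (Q1 s' (greedy am Q2 s') - Q2 s' (greedy am Q1 s')) - (Q1 s a - Q2 s a).
pose ind s0 a0 : R := if (s0 == s) && (a0 == a) then 1 else 0.
have dle1 : forall s0 a0, d s0 a0 <= 1.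
  move=> s0 a0; rewrite -hd1 (bigD1 s0) //= (bigD1 a0) //= -addrA lerDl.
  apply: addr_ge0; apply: sumr_ge0 => i _; last apply: sumr_ge0 => j _; exact: ltW.
have hX : `|X| <= C.
  have := @greedy_diff am Q1 Q2 2 s' hm hQ; have := hQ s a.
  rewrite /X /C !ler_norml => /andP[a1 a2] /andP[b1 b2].
  apply/andP; split; nra.
have hZ : forall s0 a0, `|Z s0 a0| <= C.
  move=> s0 a0.
  have hs : `|\sum_(s'' : S) P s0 a0 s'' *
     (Q1 s'' (greedy am Q2 s'') - Q2 s'' (greedy am Q1 s''))| <= 2.
    apply: le_trans (ler_norm_sum _ _ _) _.
    apply: le_trans (_ : \sum_(s'' : S) P s0 a0 s'' * 2 <= _); last first.
      by rewrite -mulr_suml hP1 mul1r.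
    apply: ler_sum => i _; rewrite normrM ger0_norm //.
    apply: ler_wpM2l => //; exact: greedy_diff.
  have := hQ s0 a0.
  move: hs; rewrite /Z /C !ler_norml => /andP[a1 a2] /andP[b1 b2].
  apply/andP; split; nra.
have comp : forall s0 a0, noise d P r gamma am Q1 Q2 (s, a, s') s0 a0
    - noise d P r gamma am Q2 Q1 (s, a, s') s0 a0 = ind s0 a0 * X - d s0 a0 * Z s0 a0.
  move=> s0 a0; rewrite /noise /ind /X /Z.
  under [X in _ = _ - _ * (_ * X - _)]eq_bigr do rewrite mulrBr.
  rewrite sumrB.
  by case: ifP => _; ring.
have bnd : forall s0 a0, (ind s0 a0 * X - d s0 a0 * Z s0 a0) ^+ 2
    <= 2 * C ^+ 2 * (ind s0 a0 + d s0 a0).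
  move=> s0 a0.
  have x2 : X ^+ 2 <= C ^+ 2.
    rewrite -real_normK ?num_real // lerXn2r ?nnegrE //.
    by apply: le_trans (normr_ge0 _) hX.
  have h1 : (ind s0 a0 * X) ^+ 2 <= C ^+ 2 * ind s0 a0.
    by rewrite /ind; case: ifP => _; rewrite ?mul1r ?mul0r ?mulr1 ?mulr0 ?expr0n.
  have h2 : (d s0 a0 * Z s0 a0) ^+ 2 <= C ^+ 2 * d s0 a0.
    rewrite exprMn.
    have z2 : Z s0 a0 ^+ 2 <= C ^+ 2.
      rewrite -real_normK ?num_real // lerXn2r ?nnegrE //.
      by apply: le_trans (normr_ge0 _) (hZ s0 a0).
    have dd : d s0 a0 ^+ 2 <= d s0 a0.
      rewrite expr2 -[X in _ <= X]mulr1 ler_wpM2l //; exact: ltW.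
    have z0 : 0 <= Z s0 a0 ^+ 2 by rewrite sqr_ge0.
    have d0 := hd s0 a0.
    nra.
  have := sqr_ge0 (ind s0 a0 * X + d s0 a0 * Z s0 a0).
  nra.
rewrite /sqnorm.
apply: le_trans (_ : \sum_(s0 : S) \sum_(a0 : A) 2 * C ^+ 2 * (ind s0 a0 + d s0 a0) <= _).
  apply: ler_sum => s0 _; apply: ler_sum => a0 _; rewrite comp; exact: bnd.
have sind : \sum_(s0 : S) \sum_(a0 : A) ind s0 a0 = 1.
  rewrite (bigD1 s) //= (bigD1 a) //= /ind !eqxx /= big1 ?addr0.
    rewrite big1 ?addr0 // => s0 /negbTE ->; exact: big1.
  by move=> a0 /negbTE ->; rewrite ?andbF.
have -> : \sum_(s0 : S) \sum_(a0 : A) 2 * C ^+ 2 * (ind s0 a0 + d s0 a0) = 4 * C ^+ 2.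
  under eq_bigr do rewrite -mulr_sumr big_split /=.
  by rewrite -mulr_sumr big_split /= sind hd1; ring.
have g1 : 0 < 1 - gamma by lra.
rewrite ler_pdivlMr ?exprn_gt0 // /C.
have q : 0 <= gamma * gamma by nra.
have : (1 - gamma * gamma) ^+ 2 <= 1.
  have gg : gamma * gamma <= gamma by rewrite -[X in _ <= X]mulr1 ler_wpM2l //; lra.
  have u1 : 0 <= 1 - gamma * gamma by lra.
  have u2 : 1 - gamma * gamma <= 1 by lra.
  rewrite expr2 -[X in _ <= X]mulr1; exact: ler_pM.
move=> h.
have -> : 4 * (2 + 2 * gamma) ^+ 2 * (1 - gamma) ^+ 2 = 16 * (1 - gamma * gamma) ^+ 2 by ring.
lra.
Qed.

End H.
Theorem lemma6 (R : realFieldType) (S A : finType)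
  (d : S -> A -> R) (P : S -> A -> S -> R) (r : S -> A -> S -> R)
  (gamma alpha : R) (am : (A -> R) -> A) (QA0 QB0 : S -> A -> R) :
  (forall s a, 0 < d s a) ->
  \sum_(s : S) \sum_(a : A) d s a = 1 ->
  (forall s a s', 0 <= P s a s') ->
  (forall s a, \sum_(s' : S) P s a s' = 1) ->
  (forall s a s', `|r s a s'| <= 1) ->
  0 < gamma < 1 ->
  0 < alpha < 1 ->
  (forall (f : A -> R) (a : A), f a <= f (am f)) ->
  (forall s a, `|QA0 s a| <= 1) ->
  (forall s a, `|QB0 s a| <= 1) ->
  forall k : nat,
    expect d P (noise_diff_sq d P r gamma alpha am QA0 QB0 (k:=k))
    <= 16 / (1 - gamma) ^+ 2.
Proof.
move=> hd hd1 hP hP1 hr hg ha hm hA hB k.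
rewrite /expect.
have hs : \sum_(x : sample S A) sample_prob d P x = 1.
  transitivity (\sum_(p : S * A) \sum_(s' : S) sample_prob d P (p, s')).
    by rewrite pair_bigA; apply: eq_bigr => -[[s a] s'].
  transitivity (\sum_(s : S) \sum_(a : A) \sum_(s' : S) sample_prob d P (s, a, s')).
    by rewrite [RHS]pair_bigA; apply: eq_bigr => -[s a].
  rewrite -hd1; apply: eq_bigr => s _; apply: eq_bigr => a _.
  by rewrite /sample_prob -mulr_sumr hP1 mulr1.
apply: le_trans (_ : \sum_(t : {ffun 'I_k.+1 -> sample S A})
   (\prod_(i < k.+1) sample_prob d P (t i)) * (16 / (1 - gamma) ^+ 2) <= _).
  apply: ler_sum => t _; apply: ler_wpM2l.
    apply: prodr_ge0 => i _; case: (t i) => [[s a] s'] /=.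
    by apply: mulr_ge0; [exact: ltW|].
  rewrite /noise_diff_sq; apply: pointwise => //.
  apply: iter_inv => // s a /=.
  have := hA s a; have := hB s a; rewrite !ler_norml => /andP[a1 a2] /andP[b1 b2].
  apply/andP; split; lra.
rewrite -mulr_suml.
rewrite -(bigA_distr_bigA (fun (i : 'I_k.+1) (x : sample S A) => sample_prob d P x)) /=.
by rewrite hs prodr_const expr1n mul1r.
Qed.
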